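(* Let $P$ be a quantum principal bundle with structure Hopf algebra $H$ (invertible antipode $S$) over $M$, and let $\omega:H\to\Omega^1P$ be a connection. The following are equivalent: (i) $\omega$ is a left strong connection; (ii) $(\Delta_L\otimes\mathrm{id})(\omega(h))=h\otimes1\otimes1-\epsilon(h)1\otimes1\otimes1+h_{(1)}\otimes\omega(h_{(2)})$ for all $h\in H$; (iii) $(\mathrm{id}\otimes\Delta_R)(\omega(h))=1\otimes1\otimes h-\epsilon(h)1\otimes1\otimes1+\omega(h_{(1)})\otimes h_{(2)}$ for all $h\in H$. Moreover, in this case $\bar D=(\mathrm{id}-\bar\Pi_\omega)d$ preserves right strong tensoriality: $(\mathrm{id}-\bar\Pi_\omega)(dp)\in P\,\Omega^1M$ for all $p\in P$.
   Context: $k$ is a field. For a unital algebra $A$, $\Omega^1A=\ker(\mu:A\otimes A\to A)$ with $da=1\otimes a-a\otimes1$; forms are multiplied by concatenation (multiplying adjacent tensor factors). A quantum principal bundle: $H$ a Hopf algebra ($\Delta h=h_{(1)}\otimes h_{(2)}$, counit $\epsilon$, invertible antipode $S$); $P$ a right $H$-comodule algebra with $\Delta_R(p)=p^{(1)}\otimes p^{(2)}$; $M=\{p:\Delta_Rp=p\otimes1\}$; $P$ flat over $M$; $P\otimes_MP\to P\otimes H$, $p\otimes p'\mapsto pp'^{(1)}\otimes p'^{(2)}$ bijective. The associated left coaction of $H^{\rm op}$ on $P$ is $\Delta_L(p)=S^{-1}(p^{(2)})\otimes p^{(1)}$, written $\Delta_L(p)=p^{\tilde{(1)}}\otimes p^{\tilde{(2)}}$.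 In (ii), $\Delta_L$ acts on the first tensor factor of $\omega(h)\in P\otimes P$; in (iii), $\Delta_R$ acts on the second. A connection is a linear $\omega:H\to\Omega^1P\subset P\otimes P$ with $\omega(1)=0$, $\sum\omega_\alpha\omega^\alpha{}^{(1)}\otimes\omega^\alpha{}^{(2)}=1\otimes(h-\epsilon(h)1)$ where $\omega(h)=\sum\omega_\alpha\otimes\omega^\alpha$, and $\Delta_R(\omega(h))=\omega(h_{(2)})\otimes S(h_{(1)})h_{(3)}$ (tensor product coaction on $P\otimes P$). $\Pi_\omega(\sum p\otimes p')=\sum pp'^{(1)}\omega(p'^{(2)})$ and $\bar\Pi_\omega(\sum p\otimes p')=\sum\omega(p^{\tilde{(1)}})p^{\tilde{(2)}}p'$ on $\Omega^1P$. $\omega$ is left strong if $(\mathrm{id}-\Pi_\omega)(dp)\in(\Omega^1M)P$ for all $p\in P$. *)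

(* Defs.v *)
(* Tensor products over the field k are represented by
   finite lists of elementary tensors; two lists denote the same tensor iff
   every multilinear form into k takes the same value on them (over a field,
   linear functionals separate the points of V (x) W).  Maps between tensor
   spaces are defined on representatives; they are well defined on tensors
   because the structure maps are assumed linear (with respect to teq). *)
From HB Require Import structures.
From mathcomp Require Import all_boot all_order all_algebra.
Set Implicit Arguments. Unset Strict Implicit. Unset Printing Implicit Defensive.
Import GRing.Theory.
Local Open Scope ring_scope.

Section Tensors.
Variable k : fieldType.

Definition bilinear_form (U V : lmodType k) (f : U -> V -> k) : Prop :=
  (forall (a : k) u1 u2 v, f (a *: u1 + u2) v = a * f u1 v + f u2 v) /\
  (forall (a : k) u v1 v2, f u (a *: v1 + v2) = a * f u v1 + f u v2).

Definition eval2 (U V : Type) (f : U -> V -> k) (t : seq (U * V)) : k :=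
  \sum_(x <- t) f x.1 x.2.

Definition teq2 (U V : lmodType k) (t t' : seq (U * V)) : Prop :=
  forall f : U -> V -> k, bilinear_form f -> eval2 f t = eval2 f t'.

Definition trilinear_form (U V W : lmodType k) (f : U -> V -> W -> k) : Prop :=
  (forall (a : k) u1 u2 v w, f (a *: u1 + u2) v w = a * f u1 v w + f u2 v w) /\
  (forall (a : k) u v1 v2 w, f u (a *: v1 + v2) w = a * f u v1 w + f u v2 w) /\
  (forall (a : k) u v w1 w2, f u v (a *: w1 + w2) = a * f u v w1 + f u v w2).

Definition eval3 (U V W : Type) (f : U -> V -> W -> k) (t : seq (U * V * W)) : k :=
  \sum_(x <- t) f x.1.1 x.1.2 x.2.

Definition teq3 (U V W : lmodType k) (t t' : seq (U * V * W)) : Prop :=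
  forall f : U -> V -> W -> k, trilinear_form f -> eval3 f t = eval3 f t'.

Definition tlinear2 (X U V : lmodType k) (F : X -> seq (U * V)) : Prop :=
  forall (a : k) x y, teq2 (F (a *: x + y))
    ([seq (a *: z.1, z.2) | z <- F x] ++ F y).

Definition klinear (X Y : lmodType k) (f : X -> Y) : Prop :=
  forall (a : k) x y, f (a *: x + y) = a *: f x + f y.

Definition kform (X : lmodType k) (f : X -> k) : Prop :=
  forall (a : k) x y, f (a *: x + y) = a * f x + f y.

Definition tmul (A B : algType k) (s t : seq (A * B)) : seq (A * B) :=
  [seq (x.1 * y.1, x.2 * y.2) | x <- s, y <- t].

End Tensors.

Section Hopf.
Variables (k : fieldType) (H : algType k).
Variables (cop : H -> seq (H * H)) (eps : H -> k) (S : H -> H).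

(* (Delta (x) id) Delta h  and  (id (x) Delta) Delta h, i.e. h1 (x) h2 (x) h3 *)
Definition cop2l (h : H) : seq (H * H * H) :=
  [seq (z.1, z.2, y.2) | y <- cop h, z <- cop y.1].
Definition cop2r (h : H) : seq (H * H * H) :=
  [seq (y.1, z.1, z.2) | y <- cop h, z <- cop y.2].

Definition is_hopf_algebra : Prop :=
  [/\ tlinear2 cop, kform eps & klinear S] /\
  [/\ (forall h, teq3 (cop2l h) (cop2r h)),
      (forall h, \sum_(x <- cop h) eps x.1 *: x.2 = h),
      (forall h, \sum_(x <- cop h) eps x.2 *: x.1 = h),
      (forall g h, teq2 (cop (g * h)) (tmul (cop g) (cop h))) &
      teq2 (cop 1) [:: (1, 1)]] /\
  [/\ (forall g h, eps (g * h) = eps g * eps h), eps 1 = 1,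
      (forall h, \sum_(x <- cop h) S x.1 * x.2 = (eps h)%:A) &
      (forall h, \sum_(x <- cop h) x.1 * S x.2 = (eps h)%:A)].
End Hopf.

Section Bundle.
Variables (k : fieldType) (H P : algType k).
Variables (cop : H -> seq (H * H)) (eps : H -> k) (S Sinv : H -> H).
Variable (coR : P -> seq (P * H)).

Definition is_comodule_algebra : Prop :=
  [/\ tlinear2 coR,
      (forall p, teq3 [seq (z.1, z.2, y.2) | y <- coR p, z <- coR y.1]
                      [seq (y.1, z.1, z.2) | y <- coR p, z <- cop y.2]),
      (forall p, \sum_(x <- coR p) eps x.2 *: x.1 = p),
      (forall p q, teq2 (coR (p * q)) (tmul (coR p) (coR q))) &
      teq2 (coR 1) [:: (1, 1)]].

(* coinvariants M = {p | Delta_R p = p (x) 1} *)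
Definition coinv (p : P) : Prop := teq2 (coR p) [:: (p, 1)].

Definition is_right_Mmodule (V : lmodType k) (act : V -> P -> V) : Prop :=
  [/\ (forall v, act v 1 = v),
      (forall v m m', coinv m -> coinv m' -> act (act v m) m' = act v (m * m')),
      (forall (a : k) v w m, coinv m -> act (a *: v + w) m = a *: act v m + act w m) &
      (forall (a : k) v m m', coinv m -> coinv m' ->
          act v (a *: m + m') = a *: act v m + act v m')].

Definition is_submodule (V : lmodType k) (act : V -> P -> V) (N : V -> Prop) : Prop :=
  [/\ N 0, (forall (a : k) v w, N v -> N w -> N (a *: v + w)) &
      (forall v m, N v -> coinv m -> N (act v m))].

Definition zero_in_VMP (V : lmodType k) (act : V -> P -> V) (t : seq (V * P)) : Prop :=
  forall f : V -> P -> k, bilinear_form f ->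
    (forall v m p, coinv m -> f (act v m) p = f v (m * p)) -> eval2 f t = 0.

(* t = 0 in N (x)_M P (forms on N (x)_M P = balanced bilinear forms on N x P) *)
Definition zero_in_NMP (V : lmodType k) (act : V -> P -> V) (N : V -> Prop)
    (t : seq (V * P)) : Prop :=
  forall f : V -> P -> k,
    (forall (a : k) u1 u2 v, N u1 -> N u2 -> f (a *: u1 + u2) v = a * f u1 v + f u2 v) ->
    (forall (a : k) u v1 v2, N u -> f u (a *: v1 + v2) = a * f u v1 + f u v2) ->
    (forall v m p, N v -> coinv m -> f (act v m) p = f v (m * p)) ->
    eval2 f t = 0.

(* P flat as a left M-module: - (x)_M P preserves injections of right M-modules *)
Definition left_flat_over_M : Prop :=
  forall (V : lmodType k) (act : V -> P -> V) (N : V -> Prop),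
    is_right_Mmodule act -> is_submodule act N ->
    forall t : seq (V * P), (forall x, x \in t -> N x.1) ->
      zero_in_VMP act t -> zero_in_NMP act N t.

Definition zero_in_PMP (t : seq (P * P)) : Prop :=
  forall f : P -> P -> k, bilinear_form f ->
    (forall p m q, coinv m -> f (p * m) q = f p (m * q)) -> eval2 f t = 0.

Definition can (t : seq (P * P)) : seq (P * H) :=
  [seq (x.1 * y.1, y.2) | x <- t, y <- coR x.2].

Definition is_qpb : Prop :=
  [/\ is_hopf_algebra cop eps S, cancel S Sinv & cancel Sinv S] /\
  [/\ is_comodule_algebra, left_flat_over_M,
      (* can : P (x)_M P -> P (x) H bijective *)
      (forall u : seq (P * H), exists t, teq2 (can t) u) &
      (forall t, teq2 (can t) [::] -> zero_in_PMP t)].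

(* universal calculus *)
Definition in_Omega1 (t : seq (P * P)) : Prop := \sum_(x <- t) x.1 * x.2 = 0.
Definition dP (p : P) : seq (P * P) := [:: (1, p); (- p, 1)].

(* (Omega^1 M) P and P (Omega^1 M), as subspaces of Omega^1 P in P (x) P *)
Definition in_Omega1M (xi : seq (P * P)) : Prop :=
  (forall x, x \in xi -> coinv x.1 /\ coinv x.2) /\ in_Omega1 xi.

Definition in_Omega1M_P (t : seq (P * P)) : Prop :=
  exists s : seq (seq (P * P) * P),
    (forall x, x \in s -> in_Omega1M x.1) /\
    teq2 t [seq (a.1, a.2 * x.2) | x <- s, a <- x.1].

Definition in_P_Omega1M (t : seq (P * P)) : Prop :=
  exists s : seq (P * seq (P * P)),
    (forall x, x \in s -> in_Omega1M x.2) /\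
    teq2 t [seq (x.1 * a.1, a.2) | x <- s, a <- x.2].

Variable omega : H -> seq (P * P).

Definition coL (p : P) : seq (H * P) := [seq (Sinv y.2, y.1) | y <- coR p].

Definition coR2 (t : seq (P * P)) : seq (P * P * H) :=
  flatten [seq [seq (a.1, b.1, a.2 * b.2) | a <- coR x.1, b <- coR x.2] | x : P * P <- t].

Definition is_connection : Prop :=
  [/\ tlinear2 omega,
      teq2 (omega 1) [::],
      (forall h, in_Omega1 (omega h)),
      (forall h, teq2 (can (omega h)) [:: (1, h); (1, - (eps h)%:A)]) &
      (forall h, teq3 (coR2 (omega h))
         [seq (z.1, z.2, S y.1.1 * y.2) | y <- cop2l cop h, z <- omega y.1.2])].

Definition Pi (t : seq (P * P)) : seq (P * P) :=
  flatten [seq [seq (x.1 * a.1 * z.1, z.2) | a <- coR x.2, z <- omega a.2] | x : P * P <- t].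

Definition Pibar (t : seq (P * P)) : seq (P * P) :=
  flatten [seq [seq (z.1, z.2 * a.2 * x.2) | a : H * P <- coL x.1, z : P * P <- omega a.1] | x : P * P <- t].

Definition idminus (F : seq (P * P) -> seq (P * P)) (t : seq (P * P)) :=
  t ++ [seq (- z.1, z.2) | z <- F t].

Definition left_strong : Prop := forall p, in_Omega1M_P (idminus Pi (dP p)).

Definition right_strong_bar : Prop := forall p, in_P_Omega1M (idminus Pibar (dP p)).

Definition cond_ii : Prop := forall h,
  teq3 [seq (a.1, a.2, x.2) | x <- omega h, a <- coL x.1]
       ([:: (h, 1, 1); (- (eps h)%:A, 1, 1)] ++
        [seq (y.1, z.1, z.2) | y <- cop h, z <- omega y.2]).

Definition cond_iii : Prop := forall h,
  teq3 [seq (x.1, a.1, a.2) | x <- omega h, a <- coR x.2]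
       ([:: (1, 1, h); (1, 1, - (eps h)%:A)] ++
        [seq (z.1, z.2, y.2) | y <- cop h, z <- omega y.1]).

End Bundle.

(* Main.v *)
Require Import Defs.
From HB Require Import structures.
From mathcomp Require Import all_boot all_order all_algebra.
From mathcomp Require Import ring.
From mathcomp Require boolp classical_sets.
Set Implicit Arguments. Unset Strict Implicit. Unset Printing Implicit Defensive.
Import GRing.Theory.
Local Open Scope ring_scope.

Section Lin.
Variable k : fieldType.

Definition lin (U : lmodType k) (f : U -> k) :=
  forall (a : k) x y, f (a *: x + y) = a * f x + f y.

Section LinU.
Variable U : lmodType k.
Implicit Types f g : U -> k.

Lemma lin0 f : lin f -> f 0 = 0.
Proof.
move=> Hf; have := Hf 1 0 0; rewrite scale1r addr0 mul1r.
by move/(congr1 (fun z => z - f 0)); rewrite subrr addrK.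
Qed.
Lemma linD f : lin f -> forall x y, f (x + y) = f x + f y.
Proof. by move=> Hf x y; rewrite -{1}[x]scale1r Hf mul1r. Qed.
Lemma linZ f : lin f -> forall a x, f (a *: x) = a * f x.
Proof. by move=> Hf a x; rewrite -[a *: x]addr0 Hf lin0 // addr0. Qed.
Lemma linN f : lin f -> forall x, f (- x) = - f x.
Proof. by move=> Hf x; rewrite -scaleN1r linZ // mulN1r. Qed.
Lemma linB f : lin f -> forall x y, f (x - y) = f x - f y.
Proof. by move=> Hf x y; rewrite linD // linN. Qed.
Lemma lin_sumE f (I : Type) (s : seq I) (F : I -> U) :
  lin f -> f (\sum_(i <- s) F i) = \sum_(i <- s) f (F i).
Proof.
move=> Hf; elim: s => [|a s IH]; first by rewrite !big_nil lin0.
by rewrite !big_cons linD // IH.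
Qed.
Lemma lin_mk f : (forall x y, f (x + y) = f x + f y) -> (forall a x, f (a *: x) = a * f x) -> lin f.
Proof. by move=> HD HZ a x y; rewrite HD HZ. Qed.

Lemma lin_sum (I : Type) (s : seq I) (B : I -> U -> k) :
  (forall i, lin (B i)) -> lin (fun x => \sum_(i <- s) B i x).
Proof.
move=> HB a x y; rewrite mulr_sumr -big_split /=.
by apply: eq_bigr => i _; rewrite HB.
Qed.
Lemma lin_add g f : lin f -> lin g -> lin (fun x => f x + g x).
Proof. by move=> Hf Hg a x y; rewrite Hf Hg mulrDr; ring. Qed.
Lemma lin_sub g f : lin f -> lin g -> lin (fun x => f x - g x).
Proof. by move=> Hf Hg a x y; rewrite Hf Hg mulrBr; ring. Qed.
Lemma lin_opp f : lin f -> lin (fun x => - f x).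
Proof. by move=> Hf a x y; rewrite Hf; ring. Qed.
Lemma lin_scl c f : lin f -> lin (fun x => c * f x).
Proof. by move=> Hf a x y; rewrite Hf; ring. Qed.
Lemma lin_scr c f : lin f -> lin (fun x => f x * c).
Proof. by move=> Hf a x y; rewrite Hf; ring. Qed.
End LinU.

Definition bil (U V : lmodType k) (f : U -> V -> k) :=
  (forall v, lin (fun u => f u v)) /\ (forall u, lin (f u)).
Definition tri (U V W : lmodType k) (f : U -> V -> W -> k) :=
  [/\ (forall v w, lin (fun u => f u v w)), (forall u w, lin (fun v => f u v w))
    & (forall u v, lin (f u v))].

Lemma bilE (U V : lmodType k) (f : U -> V -> k) : bil f <-> bilinear_form f.
Proof. by split=> [[H1 H2]|[H1 H2]]; split=> *; rewrite ?H1 ?H2. Qed.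
Lemma triE (U V W : lmodType k) (f : U -> V -> W -> k) : tri f <-> trilinear_form f.
Proof.
by split=> [[H1 H2 H3]|[H1 [H2 H3]]]; [split; [|split]|split]=> *; rewrite ?H1 ?H2 ?H3.
Qed.

Definition klin (X Y : lmodType k) (L : X -> Y) := klinear L.

Lemma klin_comp (X Y : lmodType k) (L : X -> Y) (f : Y -> k) :
  klin L -> lin f -> lin (fun x => f (L x)).
Proof. by move=> HL Hf a x y; rewrite HL Hf. Qed.
Lemma klin_id (X : lmodType k) : klin (fun x : X => x).
Proof. by []. Qed.
Lemma klin_compL (X Y Z : lmodType k) (L : X -> Y) (M : Y -> Z) :
  klin M -> klin L -> klin (fun x => M (L x)).
Proof. by move=> HM HL a x y; rewrite HL HM. Qed.
Lemma klin_mulr (A : algType k) (X : lmodType k) (L : X -> A) (c : A) :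
  klin L -> klin (fun x => L x * c).
Proof. by move=> HL a x y; rewrite HL mulrDl scalerAl. Qed.
Lemma klin_mull (A : algType k) (X : lmodType k) (L : X -> A) (c : A) :
  klin L -> klin (fun x => c * L x).
Proof. by move=> HL a x y; rewrite HL mulrDr scalerAr. Qed.
Lemma klin_opp (X Y : lmodType k) (L : X -> Y) : klin L -> klin (fun x => - L x).
Proof. by move=> HL a x y; rewrite HL opprD scalerN. Qed.
Lemma klin_scale (X Y : lmodType k) (L : X -> Y) (c : k) : klin L -> klin (fun x => c *: L x).
Proof. by move=> HL a x y; rewrite HL scalerDr !scalerA mulrC. Qed.
Lemma klin_alg (A : algType k) (X : lmodType k) (f : X -> k) :
  lin f -> klin (fun x => (f x)%:A : A).
Proof. by move=> Hf a x y; rewrite Hf scalerDl scalerA. Qed.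

Lemma lin_B1 (U V X : lmodType k) (f : U -> V -> k) (L : X -> U) v :
  bil f -> klin L -> lin (fun x => f (L x) v).
Proof. by move=> [H1 _] HL; apply: klin_comp HL (H1 v). Qed.
Lemma lin_B2 (U V X : lmodType k) (f : U -> V -> k) (L : X -> V) u :
  bil f -> klin L -> lin (fun x => f u (L x)).
Proof. by move=> [_ H2] HL; apply: klin_comp HL (H2 u). Qed.
Lemma lin_T1 (U V W X : lmodType k) (f : U -> V -> W -> k) (L : X -> U) v w :
  tri f -> klin L -> lin (fun x => f (L x) v w).
Proof. by move=> [H1 _ _] HL; apply: klin_comp HL (H1 v w). Qed.
Lemma lin_T2 (U V W X : lmodType k) (f : U -> V -> W -> k) (L : X -> V) u w :
  tri f -> klin L -> lin (fun x => f u (L x) w).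
Proof. by move=> [_ H2 _] HL; apply: klin_comp HL (H2 u w). Qed.
Lemma lin_T3 (U V W X : lmodType k) (f : U -> V -> W -> k) (L : X -> W) u v :
  tri f -> klin L -> lin (fun x => f u v (L x)).
Proof. by move=> [_ _ H3] HL; apply: klin_comp HL (H3 u v). Qed.
Lemma lin_U1 (U X : lmodType k) (f : U -> k) (L : X -> U) :
  lin f -> klin L -> lin (fun x => f (L x)).
Proof. by move=> Hf HL; apply: klin_comp HL Hf. Qed.

Lemma teq2_sum (U V : lmodType k) (t t' : seq (U * V)) (B : U * V -> k) :
  teq2 t t' -> bil (fun u v => B (u, v)) -> \sum_(a <- t) B a = \sum_(a <- t') B a.
Proof.
move=> Ht /bilE HB; have := Ht _ HB; rewrite /eval2.
have E s : \sum_(a <- s) B a = \sum_(x <- s) B (x.1, x.2).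
  by apply: eq_bigr => -[].
by rewrite !E.
Qed.
Lemma teq3_sum (U V W : lmodType k) (t t' : seq (U * V * W)) (B : U * V * W -> k) :
  teq3 t t' -> tri (fun u v w => B (u, v, w)) -> \sum_(a <- t) B a = \sum_(a <- t') B a.
Proof.
move=> Ht /triE HB; have := Ht _ HB; rewrite /eval3.
have E s : \sum_(a <- s) B a = \sum_(x <- s) B (x.1.1, x.1.2, x.2).
  by apply: eq_bigr => -[[]].
by rewrite !E.
Qed.

Lemma lin_tl (X U V : lmodType k) (F : X -> seq (U * V)) (B : U * V -> k) :
  tlinear2 F -> (forall v, lin (fun u => B (u, v))) -> (forall u, lin (fun v => B (u, v))) ->
  lin (fun x => \sum_(a <- F x) B a).
Proof.
move=> HF H1 H2 a x y; rewrite (teq2_sum (HF a x y)); last by split.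
rewrite big_cat big_map /= mulr_sumr; congr (_ + _); apply: eq_bigr => -[u v] _ /=.
by rewrite -[a *: u]addr0 H1 -[u](addr0) (lin0 (H1 v)) !addr0.
Qed.

Lemma lin_tlc (X Y U V : lmodType k) (F : Y -> seq (U * V)) (L : X -> Y) (B : U * V -> k) :
  tlinear2 F -> klin L -> (forall v, lin (fun u => B (u, v))) -> (forall u, lin (fun v => B (u, v))) ->
  lin (fun x => \sum_(a <- F (L x)) B a).
Proof.
move=> HF HL H1 H2; apply: (klin_comp (f := fun y => \sum_(a <- F y) B a) HL).
exact: lin_tl.
Qed.
Lemma klin0 (X Y : lmodType k) (L : X -> Y) : klin L -> L 0 = 0.
Proof.
move=> HL; have := HL 1 0 0; rewrite !scale1r addr0.
by move/(congr1 (fun z => z - L 0)); rewrite subrr addrK.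
Qed.
Lemma klinZ (X Y : lmodType k) (L : X -> Y) a x : klin L -> L (a *: x) = a *: L x.
Proof. by move=> HL; rewrite -[a *: x]addr0 HL klin0 // addr0. Qed.
Lemma klin_sum (X Y : lmodType k) (L : X -> Y) (I : Type) (s : seq I) (F : I -> X) :
  klin L -> L (\sum_(i <- s) F i) = \sum_(i <- s) L (F i).
Proof.
move=> HL; have L0 : L 0 = 0.
  have := HL 1 0 0; rewrite !scale1r addr0.
  by move/(congr1 (fun z => z - L 0)); rewrite subrr addrK.
elim: s => [|a s IH]; first by rewrite !big_nil.
by rewrite !big_cons -IH; have := HL 1 (F a) (\sum_(i <- s) F i); rewrite !scale1r.
Qed.

Lemma teq2_refl (U V : lmodType k) (t : seq (U * V)) : teq2 t t.
Proof. by []. Qed.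
Lemma teq2_sym (U V : lmodType k) (t t' : seq (U * V)) : teq2 t t' -> teq2 t' t.
Proof. by move=> H f Hf; rewrite H. Qed.
Lemma teq2_trans (U V : lmodType k) (t1 t2 t3 : seq (U * V)) :
  teq2 t1 t2 -> teq2 t2 t3 -> teq2 t1 t3.
Proof. by move=> H1 H2 f Hf; rewrite H1 ?H2. Qed.

End Lin.
Arguments lin_B1 {k U V X f L v}.
Arguments lin_B2 {k U V X f L u}.
Arguments lin_T1 {k U V W X f L v w}.
Arguments lin_T2 {k U V W X f L u w}.
Arguments lin_T3 {k U V W X f L u v}.
Arguments klin_mulr {k A X L c}.
Arguments klin_mull {k A X L c}.
Arguments klin_scale {k X Y L c}.


Ltac klinsolve :=
  repeat first
  [ exact: klin_id
  | assumption
  | apply: klin_mulr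
  | apply: klin_mull
  | apply: klin_opp
  | apply: klin_scale
  | (apply: klin_alg; linsolve0)
  | match goal with H : klin _ |- klin _ => apply: (klin_compL H) end
  | match goal with H : klinear _ |- klin _ => apply: (klin_compL H) end ]
with linsolve0 :=
  repeat (first
  [ match goal with |- forall _, _ => intro end
  | progress (cbn [fst snd])
  | assumption
  | solve [ match goal with H : _ |- lin _ => apply: H end ]
  | apply: lin_sum
  | apply: lin_add
  | apply: lin_sub
  | apply: lin_opp
  | apply: lin_scl
  | apply: lin_scr
  | match goal with H : tlinear2 _ |- _ => apply: (lin_tl H) end
  | match goal with H : tlinear2 _ |- _ => apply: (lin_tlc H); [klinsolve| |] end
  | match goal with H : tri _ |- _ =>
      first [apply: (lin_T1 H) | apply: (lin_T2 H) | apply: (lin_T3 H)]; klinsolve end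
  | match goal with H : bil _ |- _ =>
      first [apply: (lin_B1 H) | apply: (lin_B2 H)]; klinsolve end
  | match goal with H : lin _ |- _ => apply: (lin_U1 H); klinsolve end
  | match goal with H : kform _ |- _ => apply: (lin_U1 H); klinsolve end
  ]).


Section LA.
Variable k : fieldType.

Section Ext.
Variable V : lmodType k.

Definition in_span (w : V) (ys : seq V) :=
  exists f : nat -> k, w = \sum_(i < size ys) f i *: ys`_i.

Lemma ext_fun (w : V) (ys : seq V) : ~ in_span w ys ->
  exists phi : V -> k, [/\ lin phi, phi w = 1 & forall i, (i < size ys)%N -> phi ys`_i = 0].
Proof.
move=> nsp.
pose good (A : V * k -> Prop) :=
  [/\ (forall c x a y b, A (x, a) -> A (y, b) -> A (c *: x + y, c * a + b)),
      (forall x a b, A (x, a) -> A (x, b) -> a = b), A (w, 1) &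
      (forall i, (i < size ys)%N -> A (ys`_i, 0))].
pose Pp (A : V * k -> Prop) := (forall z, ~ A z) \/ good A.
have goodne A : good A -> ~ (forall z, ~ A z) by case=> _ _ Aw _ /(_ (w, 1)).
have [A [PA Amax]] : exists A, Pp A /\ forall B, classical_sets.proper A B -> ~ Pp B.
  apply: classical_sets.Zorn_bigcup => F FP Ftot.
  have [[X0 [FX0 [z0 X0z0]]]|nX] := boolp.pselect (exists X, F X /\ exists z, X z); last first.
    left=> z [X FX Xz]; apply: nX; exists X; split=> //; by exists z.
  have gX X : F X -> (exists z, X z) -> good X.
    by move=> FX [z Xz]; case: (FP X FX) => // /(_ z).
  have gX0 := gX _ FX0 (ex_intro _ _ X0z0).
  right; split.
  - move=> c x a y b [X1 FX1 X1xa] [X2 FX2 X2yb].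
    have [s12|s21] := Ftot _ _ FX1 FX2.
    + have [cl _ _ _] := gX _ FX2 (ex_intro _ _ X2yb).
      by exists X2 => //; apply: cl => //; apply: s12.
    + have [cl _ _ _] := gX _ FX1 (ex_intro _ _ X1xa).
      by exists X1 => //; apply: cl => //; apply: s21.
  - move=> x a b [X1 FX1 X1xa] [X2 FX2 X2yb].
    have [s12|s21] := Ftot _ _ FX1 FX2.
    + have [_ fu _ _] := gX _ FX2 (ex_intro _ _ X2yb).
      exact: (fu _ _ _ (s12 _ X1xa) X2yb).
    + have [_ fu _ _] := gX _ FX1 (ex_intro _ _ X1xa).
      exact: (fu _ _ _ X1xa (s21 _ X2yb)).
  - by case: gX0 => _ _ ? _; exists X0.
  - by case: gX0 => _ _ _ Hy i Hi; exists X0 => //; apply: Hy.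
pose G0 (z : V * k) := exists f : nat -> k, z.1 = z.2 *: w + \sum_(i < size ys) f i *: ys`_i.
have gG0 : good G0.
  split.
  - move=> c x a y b [f /= ->] [g /= ->]; exists (fun i => c * f i + g i) => /=.
    rewrite scalerDr addrACA scalerA -scalerDl; congr (_ + _).
    rewrite scaler_sumr -big_split /=; apply: eq_bigr => i _.
    by rewrite scalerA -scalerDl.
  - move=> x a b [f /= ->] [g /= Eg]; case: (eqVneq a b) => // nab; exfalso; apply: nsp.
    have nab' : a - b != 0 by rewrite subr_eq0.
    exists (fun i => (g i - f i) / (a - b)).
    have : (a - b) *: w = \sum_(i < size ys) (g i - f i) *: ys`_i.
      rewrite scalerBl -[a *: w](addrK (\sum_(i < size ys) f i *: ys`_i)) Eg.
      under [RHS]eq_bigr do rewrite scalerBl.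
      by rewrite sumrB (addrC (b *: w)) addrAC addrK.
    move/(congr1 (fun z => (a - b)^-1 *: z)); rewrite scalerA mulVf // scale1r => ->.
    rewrite scaler_sumr; apply: eq_bigr => i _; rewrite scalerA; congr (_ *: _).
    by rewrite mulrC.
  - by exists (fun _ => 0) => /=; rewrite scale1r big1 ?addr0 // => i _; rewrite scale0r.
  - move=> j Hj; exists (fun i => (i == j)%:R) => /=; rewrite scale0r add0r.
    rewrite (bigD1 (Ordinal Hj)) //= eqxx scale1r big1 ?addr0 // => i.
    by rewrite -(inj_eq val_inj) /= => /negPf ->; rewrite scale0r.
have gA : good A.
  case: PA => // emp; exfalso; apply: (Amax G0); last by right.
  split; first by move=> z /emp.
  by move=> /(_ (w, 1)); case: gG0 => _ _ Hw _ /(_ Hw) /emp.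
case: (gA) => clA fuA Aw Ay.
have A00 : A (0, 0).
  by have := clA (-1) _ _ _ _ Aw Aw; rewrite scaleN1r addNr mulN1r addNr.
have tot v : exists a, A (v, a).
  apply: boolp.contrapT => nv.
  pose A' (z : V * k) := exists x a c, A (x, a) /\ z = (x + c *: v, a).
  apply: (Amax A'); last first.
    right; split.
    - move=> c x a y b [x1 [a1 [c1 [A1 [-> ->]]]]] [x2 [a2 [c2 [A2 [-> ->]]]]].
      exists (c *: x1 + x2), (c * a1 + a2), (c * c1 + c2); split; first exact: clA.
      congr (_, _); rewrite scalerDr scalerDl scalerA; by rewrite addrACA.
    - move=> x a b [x1 [a1 [c1 [A1 [-> ->]]]]] [x2 [a2 [c2 [A2 [E ->]]]]].
      case: (boolp.pselect (c1 = c2)) => [ec|nc].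
        move: E; rewrite ec => /addIr E; rewrite E in A1; exact: fuA A1 A2.
      exfalso; apply: nv; exists ((a2 - a1) / (c1 - c2)).
      have nc' : c1 - c2 != 0 by rewrite subr_eq0; apply/eqP.
      have : A ((c1 - c2)^-1 *: (x2 - x1), (c1 - c2)^-1 * (a2 - a1)).
        have := clA (c1 - c2)^-1 _ _ _ _ (clA (-1) _ _ _ _ A1 A2) A00.
        by rewrite !addr0 scaleN1r mulN1r !(addrC (- _)).
      have -> : (c1 - c2)^-1 *: (x2 - x1) = v.
        apply/eqP; rewrite -(inj_eq (scalerI nc')) scalerA mulfV // scale1r scalerBl.
        have -> : x2 = x1 + c1 *: v - c2 *: v by rewrite E addrK.
        by rewrite addrAC (addrC x1) addrK.
      by rewrite mulrC.
    - by exists w, 1, 0; rewrite scale0r addr0.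
    - by move=> i Hi; exists ys`_i, 0, 0; rewrite scale0r addr0; split => //; apply: Ay.
  split.
    by move=> [x a] Axa; exists x, a, 0; rewrite scale0r addr0.
  move=> /(_ (v, 0)) H; apply: nv; exists 0; apply: H.
  by exists 0, 0, 1; rewrite scale1r add0r.
pose phi (v : V) := proj1_sig (boolp.cid (tot v)).
have phiP v : A (v, phi v) by rewrite /phi; case: (boolp.cid _).
exists phi; split.
- move=> a x y; apply: fuA (phiP _) _; exact: clA (phiP _) (phiP _).
- exact: fuA (phiP _) Aw.
- by move=> i Hi; apply: fuA (phiP _) (Ay i Hi).
Qed.

Lemma separation (x : V) : x != 0 -> exists phi : V -> k, lin phi /\ phi x = 1.
Proof.
move=> nx; have [|phi [? ? _]] := @ext_fun x [::]; last by exists phi.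
by case=> f; rewrite big_ord0; apply/eqP.
Qed.

Lemma sep_eq (x y : V) : (forall phi : V -> k, lin phi -> phi x = phi y) -> x = y.
Proof.
move=> Hp; apply/eqP; rewrite -subr_eq0; apply/negPn/negP => /separation [phi [Hl H1]].
by move: H1; rewrite linB // Hp // subrr => /eqP; rewrite eq_sym oner_eq0.
Qed.
End Ext.

Lemma teq_lit (U V W : lmodType k) (m : U -> V -> W) (t t' : seq (U * V)) :
  (forall v, klin (fun u => m u v)) -> (forall u, klin (m u)) -> teq2 t t' ->
  \sum_(a <- t) m a.1 a.2 = \sum_(a <- t') m a.1 a.2.
Proof.
move=> H1 H2 Ht; apply: sep_eq => phi Hphi; rewrite !lin_sumE //.
apply: (teq2_sum (B := fun a => phi (m a.1 a.2)) Ht); split=> ? /=.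
- exact: (klin_comp (L := fun u => m u _)).
- exact: klin_comp.
Qed.


Lemma exact_inv (V W X : lmodType k) (rho : V -> seq (V * X)) (u : X) : tlinear2 rho ->
  forall T : seq (V * W),
  (forall B : V -> X -> W -> k, tri B ->
     \sum_(t <- T) \sum_(a <- rho t.1) B a.1 a.2 t.2 = \sum_(t <- T) B t.1 u t.2) ->
  exists s : seq (V * W),
    (forall x, x \in s -> forall B : V -> X -> k, bil B -> \sum_(a <- rho x.1) B a.1 a.2 = B x.1 u) /\
    (forall B : V -> W -> k, bil B -> \sum_(t <- T) B t.1 t.2 = \sum_(t <- s) B t.1 t.2).
Proof.
move=> Hrho T; move Hn : (size T) => n; elim: n T Hn => [|n IH] T.
  by move/size0nil => -> _; exists [::]; split.
case: T => [|[v w] T'] //= [Hn] Hinv.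
have [[f Hf]|nsp] := boolp.pselect (in_span w (map snd T')).
  pose T'' := mkseq (fun i => ((nth (0, 0) T' i).1 + f i *: v, (nth (0, 0) T' i).2)) (size T').
  have ET (B : V -> W -> k) : bil B ->
      \sum_(t <- (v, w) :: T') B t.1 t.2 = \sum_(t <- T'') B t.1 t.2.
    move=> [B1 B2]; rewrite big_cons /= Hf size_map (lin_sumE _ _ (B2 v)).
    rewrite (big_nth (0, 0)) big_mkord /T'' /mkseq big_map.
    have -> : iota 0 (size T') = index_iota 0 (size T') by rewrite /index_iota subn0.
    rewrite big_mkord -big_split /=; apply: eq_bigr => i _.
    rewrite (linD (B1 _)) (linZ (B2 _)) (linZ (B1 _)) addrC (nth_map (0, 0)) //.
  have Hinv'' (B : V -> X -> W -> k) : tri B ->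
      \sum_(t <- T'') \sum_(a <- rho t.1) B a.1 a.2 t.2 = \sum_(t <- T'') B t.1 u t.2.
    move=> HB; have [B1 B2 B3] := HB.
    have E1 := ET (fun a c => \sum_(b <- rho a) B b.1 b.2 c).
    have E2 := ET (fun a c => B a u c).
    rewrite /= in E1 E2; rewrite -E1 -?E2; first exact: Hinv.
    - by split=> *; linsolve0.
    - by split=> *; linsolve0.
  have [s [Hs1 Hs2]] := IH T'' (etrans (size_mkseq _ _) Hn) Hinv''.
  by exists s; split=> // B HB; rewrite ET // Hs2.
have [phi [Hphi Hw H0]] := ext_fun nsp.
have H0' t : t \in T' -> phi t.2 = 0.
  move=> tT; have := H0 (index t T'); rewrite size_map index_mem => /(_ tT).
  by rewrite (nth_map t) ?index_mem // nth_index.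
have cv (B : V -> X -> k) : bil B -> \sum_(a <- rho v) B a.1 a.2 = B v u.
  move=> [B1 B2]; have := Hinv (fun a b c => B a b * phi c).
  rewrite !big_cons /= Hw mulr1.
  have -> : \sum_(t <- T') \sum_(a <- rho t.1) B a.1 a.2 * phi t.2 = 0.
    by rewrite big_seq big1 // => t tT; rewrite -mulr_suml H0' ?mulr0.
  have -> : \sum_(t <- T') B t.1 u * phi t.2 = 0.
    by rewrite big_seq big1 // => t tT; rewrite H0' ?mulr0.
  rewrite !addr0 -mulr_suml mulr1; apply; split=> *; linsolve0.
have Hinv' (B : V -> X -> W -> k) : tri B ->
    \sum_(t <- T') \sum_(a <- rho t.1) B a.1 a.2 t.2 = \sum_(t <- T') B t.1 u t.2.
  move=> HB; have := Hinv B HB; rewrite !big_cons /= (cv (fun a b => B a b w)); first by move/addrI.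
  by case: HB => B1 B2 B3; split=> *; linsolve0.
have [s [Hs1 Hs2]] := IH T' Hn Hinv'.
exists ((v, w) :: s); split.
  by move=> x; rewrite inE => /orP [/eqP -> | /Hs1 //]; apply: cv.
by move=> B HB; rewrite !big_cons Hs2.
Qed.

End LA.


Lemma sum_allp (k : nmodType) (I J K : Type) (s : seq I) (t : I -> seq J) (E : I -> J -> K) (F : K -> k) :
  \sum_(x <- flatten [seq [seq E y z | z <- t y] | y <- s]) F x = \sum_(y <- s) \sum_(z <- t y) F (E y z).
Proof. by rewrite big_flatten big_map; apply: eq_bigr => y _; rewrite big_map. Qed.

Lemma sum_allp3 (k : nmodType) (I J L K : Type) (t : seq I) (s : I -> seq J) (u : I -> J -> seq L)
  (E : I -> J -> L -> K) (G : K -> k) :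
  \sum_(v <- flatten [seq flatten [seq [seq E x a b | b <- u x a] | a <- s x] | x <- t]) G v =
  \sum_(x <- t) \sum_(a <- s x) \sum_(b <- u x a) G (E x a b).
Proof. by rewrite big_flatten big_map; apply: eq_bigr => x _; rewrite sum_allp. Qed.

Lemma tlin_bil (k : fieldType) (U V : lmodType k) (t t' : seq (U * V)) (B : U -> V -> k) :
  teq2 t t' -> bil B -> \sum_(a <- t) B a.1 a.2 = \sum_(a <- t') B a.1 a.2.
Proof. by move=> Ht HB; apply: (teq2_sum (B := fun a => B a.1 a.2) Ht). Qed.

Section Bundle.
Local Unset Implicit Arguments.
Variables (k : fieldType) (H P : algType k).
Variables (cop : H -> seq (H * H)) (eps : H -> k) (S Sinv : H -> H).
Variables (coR : P -> seq (P * H)) (omega : H -> seq (P * P)).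

Hypothesis Hcop : tlinear2 cop.
Hypothesis Heps : kform eps.
Hypothesis HS : klinear S.
Hypothesis Hcoass : forall h, teq3 (cop2l cop h) (cop2r cop h).
Hypothesis HcuL : forall h, \sum_(x <- cop h) eps x.1 *: x.2 = h.
Hypothesis HcuR : forall h, \sum_(x <- cop h) eps x.2 *: x.1 = h.
Hypothesis Hcm : forall g h, teq2 (cop (g * h)) (tmul (cop g) (cop h)).
Hypothesis Hc1 : teq2 (cop 1) [:: (1, 1)].
Hypothesis Hem : forall g h, eps (g * h) = eps g * eps h.
Hypothesis He1 : eps 1 = 1.
Hypothesis HAL : forall h, \sum_(x <- cop h) S x.1 * x.2 = (eps h)%:A.
Hypothesis HAR : forall h, \sum_(x <- cop h) x.1 * S x.2 = (eps h)%:A.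
Hypothesis HSK : cancel S Sinv.
Hypothesis HKS : cancel Sinv S.
Hypothesis HcoR : tlinear2 coR.
Hypothesis HcoA : forall p, teq3 [seq (z.1, z.2, y.2) | y <- coR p, z <- coR y.1]
                      [seq (y.1, z.1, z.2) | y <- coR p, z <- cop y.2].
Hypothesis HcoU : forall p, \sum_(x <- coR p) eps x.2 *: x.1 = p.
Hypothesis HcoM : forall p q, teq2 (coR (p * q)) (tmul (coR p) (coR q)).
Hypothesis Hco1 : teq2 (coR 1) [:: (1, 1)].
Hypothesis Hom : tlinear2 omega.
Hypothesis Hom1 : teq2 (omega 1) [::].
Hypothesis HomO : forall h, in_Omega1 (omega h).
Hypothesis HomV : forall h, teq2 (can coR (omega h)) [:: (1, h); (1, - (eps h)%:A)].
Hypothesis HomE : forall h, teq3 (coR2 coR (omega h))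
         [seq (z.1, z.2, S y.1.1 * y.2) | y <- cop2l cop h, z <- omega y.1.2].

Ltac ls := linsolve0.
Ltac rwb L := let E := fresh "E" in have E := L; cbn beta in E; rewrite E; clear E.
Ltac rwbr L := let E := fresh "E" in have E := L; cbn beta in E; rewrite -E; clear E.

Lemma CA (B : H -> H -> H -> k) h : tri B ->
  \sum_(y <- cop h) \sum_(z <- cop y.1) B z.1 z.2 y.2 =
  \sum_(y <- cop h) \sum_(z <- cop y.2) B y.1 z.1 z.2.
Proof.
move=> HB; have := teq3_sum (B := fun x : H * H * H => B x.1.1 x.1.2 x.2) (Hcoass h).
by rewrite /cop2l /cop2r !sum_allp /=; apply; exact HB.
Qed.


Lemma Sinv_lin : klinear Sinv.
Proof. by move=> a x y; apply: (can_inj HSK); rewrite HS !HKS. Qed.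


Lemma CUL (F : H -> k) h : lin F -> \sum_(x <- cop h) eps x.1 * F x.2 = F h.
Proof.
by move=> HF; rewrite -{2}(HcuL h) lin_sumE //; apply: eq_bigr => x _; rewrite linZ.
Qed.
Lemma CUR (F : H -> k) h : lin F -> \sum_(x <- cop h) eps x.2 * F x.1 = F h.
Proof.
by move=> HF; rewrite -{2}(HcuR h) lin_sumE //; apply: eq_bigr => x _; rewrite linZ.
Qed.
Lemma CoU (F : P -> k) p : lin F -> \sum_(x <- coR p) eps x.2 * F x.1 = F p.
Proof.
by move=> HF; rewrite -{2}(HcoU p) lin_sumE //; apply: eq_bigr => x _; rewrite linZ.
Qed.
Lemma CM (B : H -> H -> k) g h : bil B ->
  \sum_(x <- cop (g * h)) B x.1 x.2 = \sum_(x <- cop g) \sum_(y <- cop h) B (x.1 * y.1) (x.2 * y.2).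
Proof.
move=> HB; rewrite (tlin_bil (Hcm g h) HB) /tmul.
by rewrite (sum_allp _ _ (fun x y => (x.1 * y.1, x.2 * y.2)) (fun a => B a.1 a.2)).
Qed.
Lemma C1 (B : H -> H -> k) : bil B -> \sum_(x <- cop 1) B x.1 x.2 = B 1 1.
Proof. by move=> HB; rewrite (tlin_bil Hc1 HB) big_seq1. Qed.
Lemma CoA (B : P -> H -> H -> k) p : tri B ->
  \sum_(y <- coR p) \sum_(z <- coR y.1) B z.1 z.2 y.2 =
  \sum_(y <- coR p) \sum_(z <- cop y.2) B y.1 z.1 z.2.
Proof.
move=> HB; have := teq3_sum (B := fun x : P * H * H => B x.1.1 x.1.2 x.2) (HcoA p).
by rewrite !sum_allp /=; apply; exact HB.
Qed.
Lemma CoM (B : P -> H -> k) p q : bil B ->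
  \sum_(x <- coR (p * q)) B x.1 x.2 = \sum_(x <- coR p) \sum_(y <- coR q) B (x.1 * y.1) (x.2 * y.2).
Proof.
move=> HB; rewrite (tlin_bil (HcoM p q) HB) /tmul.
by rewrite (sum_allp _ _ (fun x y => (x.1 * y.1, x.2 * y.2)) (fun a => B a.1 a.2)).
Qed.
Lemma Co1 (B : P -> H -> k) : bil B -> \sum_(x <- coR 1) B x.1 x.2 = B 1 1.
Proof. by move=> HB; rewrite (tlin_bil Hco1 HB) big_seq1. Qed.
Lemma Om1 (B : P -> P -> k) : bil B -> \sum_(x <- omega 1) B x.1 x.2 = 0.
Proof. by move=> HB; rewrite (tlin_bil Hom1 HB) big_nil. Qed.
Lemma OmE (B : P -> P -> H -> k) h : tri B ->
  \sum_(x <- omega h) \sum_(a <- coR x.1) \sum_(b <- coR x.2) B a.1 b.1 (a.2 * b.2) =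
  \sum_(y <- cop h) \sum_(u <- cop y.1) \sum_(z <- omega u.2) B z.1 z.2 (S u.1 * y.2).
Proof.
move=> HB; have := teq3_sum (B := fun x : P * P * H => B x.1.1 x.1.2 x.2) (HomE h).
rewrite /coR2 /cop2l !sum_allp.
rewrite /coR2 sum_allp3 /=.
by apply; exact HB.
Qed.
Lemma OmV (B : P -> H -> k) h : bil B ->
  \sum_(x <- omega h) \sum_(a <- coR x.2) B (x.1 * a.1) a.2 = B 1 h + B 1 (- (eps h)%:A).
Proof.
move=> HB; have := tlin_bil (HomV h) HB.
rewrite /can sum_allp !big_cons big_nil addr0 => <-.
by [].
Qed.


Lemma S1 : S 1 = 1.
Proof.
have := HAL 1; rewrite He1 scale1r.
rewrite (teq_lit (m := fun a b => S a * b) _ _ Hc1); last 2 first.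
- by move=> v; klinsolve.
- by move=> u; klinsolve.
by rewrite big_seq1 mulr1.
Qed.
Lemma Sinv1 : Sinv 1 = 1.
Proof. by rewrite -{1}S1 HSK. Qed.

Lemma epsS h : eps (S h) = eps h.
Proof.
have := congr1 eps (HAL h); rewrite lin_sumE // -[(eps h)%:A]addr0 Heps lin0 // He1 addr0 mulr1.
move=> <-; rewrite -(CUR (fun g => eps (S g))); last by ls.
by apply: eq_bigr => x _; rewrite Hem mulrC.
Qed.
Lemma epsSinv h : eps (Sinv h) = eps h.
Proof. by rewrite -{2}(HKS h) epsS. Qed.

Lemma ARf (F : H -> k) z : lin F -> \sum_(y <- cop z) F (y.1 * S y.2) = eps z * F 1.
Proof. by move=> HF; rewrite -lin_sumE // HAR linZ. Qed.
Lemma ALf (F : H -> k) z : lin F -> \sum_(y <- cop z) F (S y.1 * y.2) = eps z * F 1.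
Proof. by move=> HF; rewrite -lin_sumE // HAL linZ. Qed.


Lemma Santi g h : S (g * h) = S h * S g.
Proof.
apply: sep_eq => phi Hphi.
transitivity (\sum_(x <- cop g) \sum_(x' <- cop x.2) \sum_(y <- cop h) \sum_(y' <- cop y.2)
   phi (S (x.1 * y.1) * (x'.1 * y'.1) * (S y'.2 * S x'.2))).
  symmetry.
  transitivity (\sum_(x <- cop g) \sum_(x' <- cop x.2) \sum_(y <- cop h)
      eps y.2 * phi (S (x.1 * y.1) * (x'.1 * S x'.2))).
    apply: eq_bigr => x _; apply: eq_bigr => x' _; apply: eq_bigr => y _.
    rewrite -[in RHS](mulr1 x'.1).
    rwbr (ARf (fun c => phi (S (x.1 * y.1) * (x'.1 * c * S x'.2)))); last by ls.
    by apply: eq_bigr => y' _; rewrite !mulrA.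
  transitivity (\sum_(x <- cop g) \sum_(x' <- cop x.2) phi (S (x.1 * h) * (x'.1 * S x'.2))).
    apply: eq_bigr => x _; apply: eq_bigr => x' _.
    by rwb (CUR (fun c => phi (S (x.1 * c) * (x'.1 * S x'.2)))); ls.
  transitivity (\sum_(x <- cop g) eps x.2 * phi (S (x.1 * h) * 1)).
    apply: eq_bigr => x _.
    by rwb (ARf (fun c => phi (S (x.1 * h) * c))); ls.
  by rwb (CUR (fun c => phi (S (c * h) * 1))); rewrite ?mulr1 //; ls.
rewrite -(CA (fun a b c => \sum_(y <- cop h) \sum_(y' <- cop y.2)
   phi (S (a * y.1) * (b * y'.1) * (S y'.2 * S c))) g); last by split; ls.
transitivity (\sum_(x <- cop g) \sum_(u <- cop x.1) \sum_(y <- cop h) \sum_(v <- cop y.1)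
   phi (S (u.1 * v.1) * (u.2 * v.2) * (S y.2 * S x.2))).
  apply: eq_bigr => x _; apply: eq_bigr => u _.
  by rewrite -(CA (fun a b c => phi (S (u.1 * a) * (u.2 * b) * (S c * S x.2))) h) //; split; ls.
transitivity (\sum_(x <- cop g) \sum_(y <- cop h) \sum_(u <- cop x.1) \sum_(v <- cop y.1)
   phi (S (u.1 * v.1) * (u.2 * v.2) * (S y.2 * S x.2))).
  by apply: eq_bigr => x _; rewrite exchange_big.
transitivity (\sum_(x <- cop g) \sum_(y <- cop h) eps x.1 * (eps y.1 * phi (S y.2 * S x.2))).
  apply: eq_bigr => x _; apply: eq_bigr => y _.
  rwbr (CM (fun a b => phi (S a * b * (S y.2 * S x.2)))); last by split; ls.
  rwb (ALf (fun c => phi (c * (S y.2 * S x.2)))); last by ls.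
  by rewrite Hem mul1r mulrA.
transitivity (\sum_(x <- cop g) eps x.1 * phi (S h * S x.2)).
  apply: eq_bigr => x _; rewrite -mulr_sumr.
  by rwb (CUL (fun c => phi (S c * S x.2))); ls.
by rwb (CUL (fun c => phi (S h * S c))); ls.
Qed.


Lemma epsK (K : H -> H -> k) z : bil K ->
  \sum_(b <- cop z) \sum_(c <- cop b.1) \sum_(d <- cop c.2) K (c.1 * S b.2) (d.1 * S d.2) =
  eps z * K 1 1.
Proof.
move=> HK.
transitivity (\sum_(b <- cop z) \sum_(c <- cop b.1) eps c.2 * K (c.1 * S b.2) 1).
  apply: eq_bigr => b _; apply: eq_bigr => c _.
  by rwb (ARf (fun u => K (c.1 * S b.2) u)); ls.
transitivity (\sum_(b <- cop z) K (b.1 * S b.2) 1).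
  apply: eq_bigr => b _.
  by rwb (CUR (fun u => K (u * S b.2) 1)); ls.
by rwb (ARf (fun u => K u 1)); ls.
Qed.

Lemma Sacomult (B : H -> H -> k) h : bil B ->
  \sum_(e <- cop (S h)) B e.1 e.2 = \sum_(e <- cop h) B (S e.2) (S e.1).
Proof.
move=> HB.
transitivity (\sum_(a <- cop h) eps a.2 * \sum_(e <- cop (S a.1)) B e.1 e.2).
  by rwb (CUR (fun g => \sum_(e <- cop (S g)) B e.1 e.2)); ls.
transitivity (\sum_(a <- cop h) \sum_(b <- cop a.2) \sum_(c <- cop b.1) \sum_(d <- cop c.2)
   \sum_(e <- cop (S a.1)) B (e.1 * (c.1 * S b.2)) (e.2 * (d.1 * S d.2))).
  apply: eq_bigr => a _.
  rwb (epsK (fun u v => \sum_(e <- cop (S a.1)) B (e.1 * u) (e.2 * v))); last by split; ls.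
  by congr (_ * _); apply: eq_bigr => e _; rewrite !mulr1.
transitivity (\sum_(a <- cop h) \sum_(b <- cop a.2) \sum_(c <- cop b.1) \sum_(d <- cop c.1)
   \sum_(e <- cop (S a.1)) B (e.1 * (d.1 * S b.2)) (e.2 * (d.2 * S c.2))).
  apply: eq_bigr => a _; apply: eq_bigr => b _.
  by rewrite -(CA (fun x y z => \sum_(e <- cop (S a.1)) B (e.1 * (x * S b.2)) (e.2 * (y * S z))) b.1) //;
    split; ls.
transitivity (\sum_(a <- cop h) \sum_(b <- cop a.2) \sum_(c <- cop b.1)
   \sum_(f <- cop (S a.1 * c.1)) B (f.1 * S b.2) (f.2 * S c.2)).
  apply: eq_bigr => a _; apply: eq_bigr => b _; apply: eq_bigr => c _.
  rwb (CM (fun u v => B (u * S b.2) (v * S c.2))); last by split; ls.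
  rewrite exchange_big; apply: eq_bigr => d _; apply: eq_bigr => e _.
  by rewrite !mulrA.
transitivity (\sum_(a <- cop h) \sum_(b <- cop a.2) \sum_(c <- cop b.2)
   \sum_(f <- cop (S a.1 * b.1)) B (f.1 * S c.2) (f.2 * S c.1)).
  apply: eq_bigr => a _.
  by rewrite (CA (fun x y z => \sum_(f <- cop (S a.1 * x)) B (f.1 * S z) (f.2 * S y)) a.2) //;
    split; ls.
rewrite -(CA (fun x y z => \sum_(c <- cop z) \sum_(f <- cop (S x * y)) B (f.1 * S c.2) (f.2 * S c.1)) h);
  last by split; ls.
transitivity (\sum_(a <- cop h) eps a.1 * \sum_(c <- cop a.2) B (S c.2) (S c.1)).
  apply: eq_bigr => a _; rewrite exchange_big mulr_sumr; apply: eq_bigr => c _.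
  rwb (ALf (fun g => \sum_(f <- cop g) B (f.1 * S c.2) (f.2 * S c.1))); last by ls.
  by rwb (C1 (fun u v => B (u * S c.2) (v * S c.1))); rewrite ?mul1r //; split; ls.
by rwb (CUL (fun g => \sum_(c <- cop g) B (S c.2) (S c.1))); ls.
Qed.

Lemma Sinvcomult (B : H -> H -> k) h : bil B ->
  \sum_(e <- cop (Sinv h)) B e.1 e.2 = \sum_(e <- cop h) B (Sinv e.2) (Sinv e.1).
Proof.
move=> HB; have HSi := Sinv_lin.
have := Sacomult (fun u v => B (Sinv v) (Sinv u)) (Sinv h); rewrite /= HKS => ->.
  by apply: eq_bigr => e _; rewrite !HSK.
by split; ls.
Qed.

Lemma SinvAL h : \sum_(e <- cop h) Sinv e.2 * e.1 = (eps h)%:A.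
Proof.
apply: (can_inj HSK); rewrite klin_sum //.
rewrite (eq_bigr (fun e => S e.1 * e.2)); last by move=> e _; rewrite Santi HKS.
by rewrite HAL klinZ // S1.
Qed.


Definition Dl p := idminus (Pi coR omega) (dP p).
Definition Dbl p := idminus (Pibar Sinv coR omega) (dP p).

Lemma DlE (B : P -> P -> k) p : bil B ->
  \sum_(t <- Dl p) B t.1 t.2 =
  B 1 p - B p 1 - \sum_(a <- coR p) \sum_(z <- omega a.2) B (a.1 * z.1) z.2.
Proof.
move=> HB; have [B1 B2] := HB.
rewrite /Dl /idminus big_cat big_map /dP /Pi sum_allp3 !big_cons !big_nil /= !addr0.
rewrite (linN (B1 _)).
have -> : \sum_(a <- coR 1) \sum_(b <- omega a.2) B (- (- p * a.1 * b.1)) b.2 = 0.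
  rwb (Co1 (fun u g => \sum_(b <- omega g) B (- (- p * u * b.1)) b.2)); last by split; ls.
  by rwb (Om1 (fun u v => B (- (- p * 1 * u)) v)); split; ls.
rewrite addr0 -sumrN; congr (_ + _); apply: eq_bigr => a _; rewrite -sumrN.
by apply: eq_bigr => z _; rewrite mul1r (linN (B1 _)).
Qed.


Lemma DblE (B : P -> P -> k) p : bil B ->
  \sum_(t <- Dbl p) B t.1 t.2 =
  B 1 p - B p 1 + \sum_(y <- coR p) \sum_(z <- omega (Sinv y.2)) B z.1 (z.2 * y.1).
Proof.
move=> HB; have [B1 B2] := HB; have HSi := Sinv_lin.
rewrite /Dbl /idminus big_cat big_map /dP /Pibar sum_allp3 !big_cons !big_nil /= !addr0.
rewrite /coL !big_map (linN (B1 _)).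
have -> : \sum_(y <- coR 1) \sum_(b <- omega (Sinv y.2)) B (- b.1) (b.2 * y.1 * p) = 0.
  rwb (Co1 (fun u g => \sum_(b <- omega (Sinv g)) B (- b.1) (b.2 * u * p))); last by split; ls.
  by rewrite Sinv1; rwb (Om1 (fun u v => B (- u) (v * 1 * p))); split; ls.
rewrite add0r; congr (_ + _).
pose F q := \sum_(y <- coR q) \sum_(b <- omega (Sinv y.2)) B (- b.1) (b.2 * y.1 * 1).
have HF : lin F by rewrite /F; ls.
transitivity (F (- p)); first by [].
rewrite (linN HF) /F -sumrN; apply: eq_bigr => y _; rewrite -sumrN.
by apply: eq_bigr => z _; rewrite mulr1 (linN (B1 _)) opprK.
Qed.


Definition iii_f h := forall G : P -> P -> H -> k, tri G ->
  \sum_(x <- omega h) \sum_(a <- coR x.2) G x.1 a.1 a.2 =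
  G 1 1 h + G 1 1 (- (eps h)%:A) + \sum_(y <- cop h) \sum_(z <- omega y.1) G z.1 z.2 y.2.
Definition F1_f h := forall G : P -> P -> H -> k, tri G ->
  \sum_(x <- omega h) \sum_(a <- coR x.1) G a.1 x.2 a.2 =
  G 1 1 (S h) + G 1 1 (S (- (eps h)%:A)) + \sum_(y <- cop h) \sum_(z <- omega y.2) G z.1 z.2 (S y.1).
Definition ii_f h := forall G : H -> P -> P -> k, tri G ->
  \sum_(x <- omega h) \sum_(y <- coR x.1) G (Sinv y.2) y.1 x.2 =
  G h 1 1 + G (- (eps h)%:A) 1 1 + \sum_(y <- cop h) \sum_(z <- omega y.2) G y.1 z.1 z.2.

Lemma iii_F1 h : iii_f h -> F1_f h.
Proof.
move=> Hiii G HG.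
transitivity (\sum_(x <- omega h) \sum_(a <- coR x.1) \sum_(b <- coR x.2) \sum_(c <- cop b.2)
    G a.1 b.1 (a.2 * (c.1 * S c.2))).
  apply: eq_bigr => x _; apply: eq_bigr => a _; symmetry.
  transitivity (\sum_(b <- coR x.2) eps b.2 * G a.1 b.1 a.2).
    apply: eq_bigr => b _.
    by rwb (ARf (fun u => G a.1 b.1 (a.2 * u))); [rewrite mulr1 | ls].
  by rwb (CoU (fun q => G a.1 q a.2)); ls.
transitivity (\sum_(x <- omega h) \sum_(a <- coR x.1) \sum_(b <- coR x.2) \sum_(d <- coR b.1)
    G a.1 d.1 (a.2 * (d.2 * S b.2))).
  apply: eq_bigr => x _; apply: eq_bigr => a _.
  by rewrite -(CoA (fun u g1 g2 => G a.1 u (a.2 * (g1 * S g2))) x.2) //; split; ls.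
transitivity (\sum_(x <- omega h) \sum_(b <- coR x.2) \sum_(a <- coR x.1) \sum_(d <- coR b.1)
    G a.1 d.1 (a.2 * (d.2 * S b.2))).
  by apply: eq_bigr => x _; rewrite exchange_big.
rwb (Hiii (fun u v g => \sum_(a <- coR u) \sum_(d <- coR v) G a.1 d.1 (a.2 * (d.2 * S g))));
  last by split; ls.
have G11 g : \sum_(a <- coR 1) \sum_(d <- coR 1) G a.1 d.1 (a.2 * (d.2 * S g)) = G 1 1 (S g).
  rwb (Co1 (fun u c => \sum_(d <- coR 1) G u d.1 (c * (d.2 * S g)))); last by split; ls.
  rwb (Co1 (fun u c => G 1 u (1 * (c * S g)))); last by split; ls.
  by rewrite !mul1r.
rewrite !G11; congr (_ + _).
transitivity (\sum_(y <- cop h) \sum_(w <- cop y.1) \sum_(u <- cop w.1) \sum_(z <- omega u.2)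
    G z.1 z.2 (S u.1 * w.2 * S y.2)).
  apply: eq_bigr => y _.
  transitivity (\sum_(z <- omega y.1) \sum_(a <- coR z.1) \sum_(d <- coR z.2)
      G a.1 d.1 (a.2 * d.2 * S y.2)).
    apply: eq_bigr => z _; apply: eq_bigr => a _; apply: eq_bigr => d _; by rewrite mulrA.
  by rwb (OmE (fun u v g => G u v (g * S y.2))); split; ls.
transitivity (\sum_(y <- cop h) \sum_(w <- cop y.2) \sum_(u <- cop y.1) \sum_(z <- omega u.2)
    G z.1 z.2 (S u.1 * w.1 * S w.2)).
  by rewrite (CA (fun a b c => \sum_(u <- cop a) \sum_(z <- omega u.2) G z.1 z.2 (S u.1 * b * S c)) h)
    //; split; ls.
transitivity (\sum_(y <- cop h) eps y.2 * \sum_(u <- cop y.1) \sum_(z <- omega u.2)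
    G z.1 z.2 (S u.1 * 1)).
  apply: eq_bigr => y _.
  rwbr (ARf (fun c => \sum_(u <- cop y.1) \sum_(z <- omega u.2) G z.1 z.2 (S u.1 * c))); last by ls.
  apply: eq_bigr => w _; apply: eq_bigr => u _; apply: eq_bigr => z _.
  by rewrite mulrA.
rwb (CUR (fun g => \sum_(u <- cop g) \sum_(z <- omega u.2) G z.1 z.2 (S u.1 * 1))); last by ls.
by apply: eq_bigr => u _; apply: eq_bigr => z _; rewrite mulr1.
Qed.


Lemma ii_F1 h : ii_f h -> F1_f h.
Proof.
move=> Hii G HG; have E := Hii (fun a b c => G b c (S a)); cbn beta in E.
rewrite -E; last by split; ls.
by apply: eq_bigr => x _; apply: eq_bigr => y _; rewrite HKS.
Qed.
Lemma F1_ii h : F1_f h -> ii_f h.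
Proof.
move=> HF G HG; have HSi := Sinv_lin; have E := HF (fun u v g => G (Sinv g) u v); cbn beta in E.
rewrite E; last by split; ls.
rewrite !HSK; congr (_ + _).
by apply: eq_bigr => y _; apply: eq_bigr => z _; rewrite HSK.
Qed.

Lemma SA (c : k) : S (- c%:A) = - c%:A.
Proof. by rewrite -scaleNr klinZ // S1. Qed.

Definition FI p := forall G : P -> H -> P -> k, tri G ->
  \sum_(t <- Dl p) \sum_(a <- coR t.1) G a.1 a.2 t.2 = \sum_(t <- Dl p) G t.1 1 t.2.

Lemma F1_FI : (forall h, F1_f h) -> forall p, FI p.
Proof.
move=> HF1 p G HG.
rwb (DlE (fun u v => \sum_(a <- coR u) G a.1 a.2 v)); last by split; ls.
rwb (DlE (fun u v => G u 1 v)); last by split; ls.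
rwb (Co1 (fun u g => G u g p)); last by split; ls.
have TA : \sum_(a <- coR p) \sum_(e <- cop a.2) G (a.1 * 1) (e.1 * S e.2) 1 = G p 1 1.
  transitivity (\sum_(a <- coR p) eps a.2 * G (a.1 * 1) 1 1).
    by apply: eq_bigr => a _; rwb (ARf (fun c => G (a.1 * 1) c 1)); ls.
  by rwb (CoU (fun q => G (q * 1) 1 1)); rewrite ?mulr1 //; ls.
have TB : \sum_(a <- coR p) \sum_(e <- cop a.2) G (a.1 * 1) (e.1 * S (- (eps e.2)%:A)) 1 =
    - \sum_(a <- coR p) G a.1 a.2 1.
  rewrite -sumrN; apply: eq_bigr => a _.
  transitivity (- \sum_(e <- cop a.2) eps e.2 * G (a.1 * 1) e.1 1).
    rewrite -sumrN; apply: eq_bigr => e _.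
    have [G1 G2 G3] := HG.
    by rewrite SA mulrN mulr_algr (linN (G2 _ _)) (linZ (G2 _ _)).
  by rwb (CUR (fun g => G (a.1 * 1) g 1)); rewrite ?mulr1 //; ls.
have TC : \sum_(a <- coR p) \sum_(e <- cop a.2) \sum_(y <- cop e.2) \sum_(z <- omega y.2)
      G (a.1 * z.1) (e.1 * S y.1) z.2 =
    \sum_(a <- coR p) \sum_(z <- omega a.2) G (a.1 * z.1) 1 z.2.
  apply: eq_bigr => a _.
  rewrite -(CA (fun g1 g2 g3 => \sum_(z <- omega g3) G (a.1 * z.1) (g1 * S g2) z.2) a.2);
    last by split; ls.
  transitivity (\sum_(e <- cop a.2) eps e.1 * \sum_(z <- omega e.2) G (a.1 * z.1) 1 z.2).
    apply: eq_bigr => e _; rewrite exchange_big mulr_sumr; apply: eq_bigr => z _.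
    by rwb (ARf (fun c => G (a.1 * z.1) c z.2)); ls.
  by rwb (CUL (fun g => \sum_(z <- omega g) G (a.1 * z.1) 1 z.2)); ls.
have T3 : \sum_(a <- coR p) \sum_(z <- omega a.2) \sum_(b <- coR (a.1 * z.1)) G b.1 b.2 z.2 =
    G p 1 1 - \sum_(a <- coR p) G a.1 a.2 1 + \sum_(a <- coR p) \sum_(z <- omega a.2) G (a.1 * z.1) 1 z.2.
  transitivity (\sum_(a <- coR p) \sum_(z <- omega a.2) \sum_(c <- coR a.1) \sum_(d <- coR z.1)
      G (c.1 * d.1) (c.2 * d.2) z.2).
    apply: eq_bigr => a _; apply: eq_bigr => z _.
    by rwb (CoM (fun u g => G u g z.2)); split; ls.
  transitivity (\sum_(a <- coR p) \sum_(c <- coR a.1) \sum_(z <- omega a.2) \sum_(d <- coR z.1)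
      G (c.1 * d.1) (c.2 * d.2) z.2).
    by apply: eq_bigr => a _; rewrite exchange_big.
  rewrite (CoA (fun u g1 g2 => \sum_(z <- omega g2) \sum_(d <- coR z.1) G (u * d.1) (g1 * d.2) z.2) p);
    last by split; ls.
  transitivity (\sum_(a <- coR p) \sum_(e <- cop a.2)
     (G (a.1 * 1) (e.1 * S e.2) 1 + G (a.1 * 1) (e.1 * S (- (eps e.2)%:A)) 1 +
      \sum_(y <- cop e.2) \sum_(z <- omega y.2) G (a.1 * z.1) (e.1 * S y.1) z.2)).
    apply: eq_bigr => a _; apply: eq_bigr => e _.
    by rwb (HF1 e.2 (fun u v g => G (a.1 * u) (e.1 * g) v)); split; ls.
  rewrite -TA -TB -TC -!big_split /=; apply: eq_bigr => a _.
  by rewrite -!big_split.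
rewrite T3; ring.
Qed.


Lemma coinvP q : (forall B : P -> H -> k, bil B -> \sum_(a <- coR q) B a.1 a.2 = B q 1) -> coinv coR q.
Proof. by move=> Hq f /bilE Hf; rewrite /eval2 big_seq1; apply: Hq. Qed.
Lemma coinvE q : coinv coR q -> forall B : P -> H -> k, bil B -> \sum_(a <- coR q) B a.1 a.2 = B q 1.
Proof. by move=> Hq B /bilE HB; have := Hq B HB; rewrite /eval2 big_seq1. Qed.
Lemma coinv1 : coinv coR 1.
Proof. exact: Hco1. Qed.
Lemma coinvN q : coinv coR q -> coinv coR (- q).
Proof.
move=> /coinvE Hq; apply: coinvP => B HB; have [B1 B2] := HB.
pose F x := \sum_(a <- coR x) B a.1 a.2.
have HF : lin F by rewrite /F; ls.
by transitivity (F (- q)); rewrite // (linN HF) /F Hq // (linN (B1 _)).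
Qed.

Lemma teq_of (U V : lmodType k) (t t' : seq (U * V)) :
  (forall B : U -> V -> k, bil B -> \sum_(x <- t) B x.1 x.2 = \sum_(x <- t') B x.1 x.2) -> teq2 t t'.
Proof. by move=> Ht f /bilE Hf; apply: Ht. Qed.

Lemma mulsum0 (T s : seq (P * P)) : teq2 T s -> in_Omega1 T -> \sum_(x <- s) x.1 * x.2 = 0.
Proof.
move=> Hts HT; rewrite -(teq_lit (m := fun a b => a * b) _ _ Hts) //.
- by move=> v; klinsolve.
- by move=> u; klinsolve.
Qed.

Lemma mk_OmP (T s : seq (P * P)) :
  (forall x, x \in s -> coinv coR x.1) -> teq2 T s -> in_Omega1 T -> in_Omega1M_P coR T.
Proof.
move=> Hs Hts HT; have s0 := mulsum0 _ _ Hts HT.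
exists [seq ([:: (m.1, 1); (1, - m.1)], m.2) | m <- s]; split.
  move=> x /mapP [m ms ->] /=; split.
    move=> y; rewrite !inE => /orP [/eqP -> | /eqP ->] /=; split.
    - exact: Hs.
    - exact: coinv1.
    - exact: coinv1.
    - exact/coinvN/Hs.
  by rewrite /in_Omega1 big_cons big_seq1 /= mulr1 mul1r subrr.
move=> f Hf; rewrite (Hts f Hf); move: f Hf; apply: teq_of => B HB; have [B1 B2] := HB.
rewrite sum_allp big_map.
transitivity (\sum_(m <- s) B m.1 m.2 + B 1 (- \sum_(m <- s) m.1 * m.2)).
  by rewrite s0 oppr0 (lin0 (B2 _)) addr0.
rewrite (linN (B2 _)) (lin_sumE _ _ (B2 _)) -sumrN -big_split /=.
by apply: eq_bigr => m _; rewrite big_cons big_seq1 /= mul1r mulNr (linN (B2 _)).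
Qed.

Lemma Dl_Om1 p : in_Omega1 (Dl p).
Proof.
rewrite /in_Omega1 /Dl /idminus big_cat big_map /dP /Pi sum_allp3 /=.
rewrite [X in _ + X = _]big1 ?addr0; first by rewrite !big_cons big_nil /= mul1r mulr1 addr0 subrr.
move=> x _; apply: big1 => a _.
transitivity (- (x.1 * a.1 * \sum_(z <- omega a.2) z.1 * z.2)).
  by rewrite mulr_sumr -sumrN; apply: eq_bigr => z _; rewrite mulNr mulrA.
by rewrite HomO mulr0 oppr0.
Qed.

Lemma Dbl_Om1 p : in_Omega1 (Dbl p).
Proof.
rewrite /in_Omega1 /Dbl /idminus big_cat big_map /dP /Pibar sum_allp3 /=.
rewrite [X in _ + X = _]big1 ?addr0; first by rewrite !big_cons big_nil /= mul1r mulr1 addr0 subrr.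
move=> x _; apply: big1 => a _.
transitivity (- ((\sum_(z <- omega a.1) z.1 * z.2) * a.2 * x.2)).
  by rewrite !mulr_suml -sumrN; apply: eq_bigr => z _; rewrite mulNr !mulrA.
by rewrite HomO !mul0r oppr0.
Qed.

Lemma FI_ls p : FI p -> in_Omega1M_P coR (Dl p).
Proof.
move=> HFI; have [s [Hs1 Hs2]] := exact_inv HcoR HFI.
apply: (mk_OmP _ s); last exact: Dl_Om1.
- by move=> x xs; apply: coinvP => B HB; apply: Hs1.
- exact: teq_of.
Qed.


Lemma ls_step1 y : in_Omega1M_P coR (Dl y) -> forall G : P -> P -> H -> k, tri G ->
  \sum_(t <- Dl y) \sum_(b <- coR t.2) G t.1 b.1 b.2 =
  \sum_(t <- Dl y) \sum_(a <- coR t.1) \sum_(b <- coR t.2) G a.1 b.1 (a.2 * b.2).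
Proof.
move=> [s' [Hs' Ht]] G HG.
rwb (tlin_bil (B := fun u v => \sum_(b <- coR v) G u b.1 b.2) Ht); last by split; ls.
rwb (tlin_bil (B := fun u v => \sum_(a <- coR u) \sum_(b <- coR v) G a.1 b.1 (a.2 * b.2)) Ht);
  last by split; ls.
rewrite !sum_allp /=; apply: eq_big_seq => x xs; apply: eq_big_seq => a ax.
have [/(_ a ax) [ca _] _] := Hs' x xs.
rwb (coinvE _ ca (fun u g => \sum_(b <- coR (a.2 * x.2)) G u b.1 (g * b.2))); last by split; ls.
by apply: eq_bigr => b _; rewrite mul1r.
Qed.

Lemma ls_step2 y (G : P -> P -> H -> k) : tri G ->
  \sum_(t <- Dl y) \sum_(a <- coR t.1) \sum_(b <- coR t.2) G a.1 b.1 (a.2 * b.2) =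
  \sum_(b <- coR y) G 1 b.1 b.2 - \sum_(a <- coR y) G a.1 1 a.2 -
  \sum_(a <- coR y) \sum_(u <- cop a.2) \sum_(z <- omega u.1) G (a.1 * z.1) z.2 u.2.
Proof.
move=> HG.
rwb (DlE (fun u v => \sum_(a <- coR u) \sum_(b <- coR v) G a.1 b.1 (a.2 * b.2))); last by split; ls.
congr (_ - _ - _).
- rwb (Co1 (fun u g => \sum_(b <- coR y) G u b.1 (g * b.2))); last by split; ls.
  by apply: eq_bigr => b _; rewrite mul1r.
- apply: eq_bigr => a _.
  by rwb (Co1 (fun u g => G a.1 u (a.2 * g))); rewrite ?mulr1 //; split; ls.
transitivity (\sum_(a <- coR y) \sum_(z <- omega a.2) \sum_(c <- coR a.1) \sum_(d <- coR z.1)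
    \sum_(b <- coR z.2) G (c.1 * d.1) b.1 (c.2 * d.2 * b.2)).
  apply: eq_bigr => a _; apply: eq_bigr => z _.
  by rwb (CoM (fun u g => \sum_(b <- coR z.2) G u b.1 (g * b.2))); split; ls.
transitivity (\sum_(a <- coR y) \sum_(c <- coR a.1) \sum_(z <- omega a.2) \sum_(d <- coR z.1)
    \sum_(b <- coR z.2) G (c.1 * d.1) b.1 (c.2 * d.2 * b.2)).
  by apply: eq_bigr => a _; rewrite exchange_big.
rewrite (CoA (fun u g1 g2 => \sum_(z <- omega g2) \sum_(d <- coR z.1)
    \sum_(b <- coR z.2) G (u * d.1) b.1 (g1 * d.2 * b.2)) y); last by split; ls.
apply: eq_bigr => a _.
transitivity (\sum_(e <- cop a.2) \sum_(w <- cop e.2) \sum_(v <- cop w.1) \sum_(z <- omega v.2)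
    G (a.1 * z.1) z.2 (e.1 * (S v.1 * w.2))).
  apply: eq_bigr => e _.
  transitivity (\sum_(z <- omega e.2) \sum_(d <- coR z.1) \sum_(b <- coR z.2)
      G (a.1 * d.1) b.1 (e.1 * (d.2 * b.2))).
    by apply: eq_bigr => z _; apply: eq_bigr => d _; apply: eq_bigr => b _; rewrite mulrA.
  by rwb (OmE (fun u v g => G (a.1 * u) v (e.1 * g))); split; ls.
transitivity (\sum_(e <- cop a.2) \sum_(w <- cop e.2) \sum_(v <- cop w.2) \sum_(z <- omega v.1)
    G (a.1 * z.1) z.2 (e.1 * (S w.1 * v.2))).
  apply: eq_bigr => e _.
  by rewrite (CA (fun x y z => \sum_(z' <- omega y) G (a.1 * z'.1) z'.2 (e.1 * (S x * z))) e.2)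
    //; split; ls.
rewrite -(CA (fun x y z => \sum_(v <- cop z) \sum_(z' <- omega v.1)
    G (a.1 * z'.1) z'.2 (x * (S y * v.2))) a.2); last by split; ls.
transitivity (\sum_(e <- cop a.2) eps e.1 * \sum_(v <- cop e.2) \sum_(z <- omega v.1)
    G (a.1 * z.1) z.2 (1 * v.2)).
  apply: eq_bigr => e _; rewrite exchange_big mulr_sumr; apply: eq_bigr => v _.
  rewrite exchange_big mulr_sumr; apply: eq_bigr => z _.
  rwbr (ARf (fun c => G (a.1 * z.1) z.2 (c * v.2))); last by ls.
  by apply: eq_bigr => w _; rewrite mulrA.
rwb (CUL (fun g => \sum_(v <- cop g) \sum_(z <- omega v.1) G (a.1 * z.1) z.2 (1 * v.2))); last by ls.
by apply: eq_bigr => u _; apply: eq_bigr => z _; rewrite mul1r.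
Qed.


Lemma ls_iii : (forall y, in_Omega1M_P coR (Dl y)) ->
  (forall u : seq (P * H), exists t, teq2 (can coR t) u) -> forall h, iii_f h.
Proof.
move=> Hls Hcan h G HG; have [G1 G2 G3] := HG.
have [t Ht] := Hcan [:: (1, h)].
have canE (B : P -> H -> k) : bil B ->
    \sum_(x <- t) \sum_(a <- coR x.2) B (x.1 * a.1) a.2 = B 1 h.
  move=> HB; have := tlin_bil Ht HB; rewrite /can sum_allp big_seq1 => <-.
  by [].
pose Phi u v := \sum_(a <- coR v) G u a.1 a.2.
have Hbeta (w y : P) : \sum_(c <- coR y) \sum_(z <- omega c.2) Phi (w * c.1 * z.1) z.2 =
    - G (w * y) 1 1 + \sum_(a <- coR y) G (w * a.1) 1 a.2 +
    \sum_(a <- coR y) \sum_(u <- cop a.2) \sum_(z <- omega u.1) G (w * (a.1 * z.1)) z.2 u.2.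
  have E1 := DlE (fun u v => Phi (w * u) v) y; cbn beta in E1.
  have E2 := ls_step1 y (Hls y) (fun u v g => G (w * u) v g); cbn beta in E2.
  have E3 := ls_step2 y (fun u v g => G (w * u) v g); cbn beta in E3.
  have {}E1 : \sum_(t <- Dl y) Phi (w * t.1) t.2 =
      Phi (w * 1) y - Phi (w * y) 1 - \sum_(a <- coR y) \sum_(z <- omega a.2) Phi (w * (a.1 * z.1)) z.2.
    by apply: E1; rewrite /Phi; split; ls.
  rewrite /Phi in E1; rewrite E2 ?E3 in E1; try by split; ls.
  have C1 : \sum_(a <- coR 1) G (w * y) a.1 a.2 = G (w * y) 1 1.
    by rwb (Co1 (fun u g => G (w * y) u g)); split; ls.
  rewrite C1 in E1; rewrite /Phi.
  transitivity (\sum_(a <- coR y) \sum_(z <- omega a.2) \sum_(a0 <- coR z.2) G (w * (a.1 * z.1)) a0.1 a0.2).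
    by apply: eq_bigr => a _; apply: eq_bigr => z _; rewrite mulrA.
  move/eqP: E1; rewrite -subr_eq0 => /eqP E1.
  apply/eqP; rewrite -subr_eq0; apply/eqP; rewrite -[RHS]E1.
  ring.
transitivity (\sum_(z <- omega h) Phi (1 * z.1) z.2).
  by apply: eq_bigr => z _; rewrite mul1r.
rwbr (canE (fun u g => \sum_(z <- omega g) Phi (u * z.1) z.2)); last by rewrite /Phi; split; ls.
transitivity (\sum_(x <- t) (- G (x.1 * x.2) 1 1 + \sum_(a <- coR x.2) G (x.1 * a.1) 1 a.2 +
    \sum_(a <- coR x.2) \sum_(u <- cop a.2) \sum_(z <- omega u.1) G (x.1 * (a.1 * z.1)) z.2 u.2)).
  by apply: eq_bigr => x _; rewrite Hbeta.
rewrite !big_split /= sumrN.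
have T1 : \sum_(x <- t) G (x.1 * x.2) 1 1 = eps h * G 1 1 1.
  transitivity (\sum_(x <- t) \sum_(c <- coR x.2) eps c.2 * G (x.1 * c.1) 1 1).
    by apply: eq_bigr => x _; symmetry; rwb (CoU (fun q => G (x.1 * q) 1 1)); ls.
  by rwb (canE (fun u g => eps g * G u 1 1)); split; ls.
have T2 : \sum_(x <- t) \sum_(a <- coR x.2) G (x.1 * a.1) 1 a.2 = G 1 1 h.
  by rwb (canE (fun u g => G u 1 g)); split; ls.
have T3 : \sum_(x <- t) \sum_(a <- coR x.2) \sum_(u <- cop a.2) \sum_(z <- omega u.1)
    G (x.1 * (a.1 * z.1)) z.2 u.2 = \sum_(u <- cop h) \sum_(z <- omega u.1) G z.1 z.2 u.2.
  transitivity (\sum_(x <- t) \sum_(a <- coR x.2) \sum_(u <- cop a.2) \sum_(z <- omega u.1)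
      G (x.1 * a.1 * z.1) z.2 u.2).
    by do 4! (apply: eq_bigr => ? _); rewrite mulrA.
  rwb (canE (fun v g => \sum_(u <- cop g) \sum_(z <- omega u.1) G (v * z.1) z.2 u.2));
    last by split; ls.
  by apply: eq_bigr => u _; apply: eq_bigr => z _; rewrite mul1r.
rewrite T1 T2 T3 (linN (G3 _ _)) (linZ (G3 _ _)); ring.
Qed.


Definition SI p := forall G : P -> H -> P -> k, tri G ->
  \sum_(t <- Dbl p) \sum_(a <- coR t.2) G a.1 a.2 t.1 = \sum_(t <- Dbl p) G t.2 1 t.1.

Lemma iii_SI : (forall h, iii_f h) -> forall p, SI p.
Proof.
move=> Hiii p G HG; have [G1 G2 G3] := HG; have HSi := Sinv_lin.
rwb (DblE (fun u v => \sum_(a <- coR v) G a.1 a.2 u)); last by split; ls.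
rwb (DblE (fun u v => G v 1 u)); last by split; ls.
rwb (Co1 (fun u g => G u g p)); last by split; ls.
have TA : \sum_(y <- coR p) \sum_(d <- coR y.1) G (1 * d.1) (Sinv y.2 * d.2) 1 = G p 1 1.
  rewrite (CoA (fun u g1 g2 => G (1 * u) (Sinv g2 * g1) 1) p); last by split; ls.
  transitivity (\sum_(y <- coR p) eps y.2 * G (1 * y.1) 1 1).
    apply: eq_bigr => y _.
    rwbr (lin_sumE (cop y.2) (fun e => Sinv e.2 * e.1) (G2 (1 * y.1) 1)).
    by rewrite SinvAL (linZ (G2 _ _)).
  by rwb (CoU (fun q => G (1 * q) 1 1)); rewrite ?mul1r //; ls.
have TB : \sum_(y <- coR p) \sum_(d <- coR y.1) G (1 * d.1) (- (eps (Sinv y.2))%:A * d.2) 1 =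
    - \sum_(d <- coR p) G d.1 d.2 1.
  transitivity (- \sum_(y <- coR p) eps y.2 * \sum_(d <- coR y.1) G (1 * d.1) d.2 1).
    rewrite -sumrN; apply: eq_bigr => y _; rewrite mulr_sumr -sumrN; apply: eq_bigr => d _.
    by rewrite epsSinv mulNr mulr_algl (linN (G2 _ _)) (linZ (G2 _ _)).
  rwb (CoU (fun q => \sum_(d <- coR q) G (1 * d.1) d.2 1)); last by ls.
  by congr (- _); apply: eq_bigr => d _; rewrite mul1r.
have TC : \sum_(y <- coR p) \sum_(e <- cop (Sinv y.2)) \sum_(z <- omega e.1) \sum_(d <- coR y.1)
      G (z.2 * d.1) (e.2 * d.2) z.1 =
    \sum_(y <- coR p) \sum_(z <- omega (Sinv y.2)) G (z.2 * y.1) 1 z.1.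
  transitivity (\sum_(y <- coR p) \sum_(e <- cop y.2) \sum_(z <- omega (Sinv e.2))
      \sum_(d <- coR y.1) G (z.2 * d.1) (Sinv e.1 * d.2) z.1).
    apply: eq_bigr => y _.
    by rwb (Sinvcomult (fun g1 g2 => \sum_(z <- omega g1) \sum_(d <- coR y.1)
      G (z.2 * d.1) (g2 * d.2) z.1) y.2); split; ls.
  rewrite -(CoA (fun q g1 g2 => \sum_(z <- omega (Sinv g2)) \sum_(d <- coR q)
      G (z.2 * d.1) (Sinv g1 * d.2) z.1) p); last by split; ls.
  apply: eq_bigr => y _; rewrite exchange_big; apply: eq_bigr => z _.
  rewrite (CoA (fun u g1 g2 => G (z.2 * u) (Sinv g2 * g1) z.1) y.1); last by split; ls.
  transitivity (\sum_(c <- coR y.1) eps c.2 * G (z.2 * c.1) 1 z.1).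
    apply: eq_bigr => c _.
    rwbr (lin_sumE (cop c.2) (fun e => Sinv e.2 * e.1) (G2 (z.2 * c.1) z.1)).
    by rewrite SinvAL (linZ (G2 _ _)).
  by rwb (CoU (fun q => G (z.2 * q) 1 z.1)); ls.
have L3 : \sum_(y <- coR p) \sum_(z <- omega (Sinv y.2)) \sum_(a <- coR (z.2 * y.1)) G a.1 a.2 z.1 =
    G p 1 1 - \sum_(d <- coR p) G d.1 d.2 1 +
    \sum_(y <- coR p) \sum_(z <- omega (Sinv y.2)) G (z.2 * y.1) 1 z.1.
  transitivity (\sum_(y <- coR p) \sum_(z <- omega (Sinv y.2)) \sum_(c <- coR z.2)
      \sum_(d <- coR y.1) G (c.1 * d.1) (c.2 * d.2) z.1).
    apply: eq_bigr => y _; apply: eq_bigr => z _.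
    by rwb (CoM (fun u g => G u g z.1)); split; ls.
  transitivity (\sum_(y <- coR p)
     (\sum_(d <- coR y.1) G (1 * d.1) (Sinv y.2 * d.2) 1 +
      \sum_(d <- coR y.1) G (1 * d.1) (- (eps (Sinv y.2))%:A * d.2) 1 +
      \sum_(e <- cop (Sinv y.2)) \sum_(z <- omega e.1) \sum_(d <- coR y.1)
        G (z.2 * d.1) (e.2 * d.2) z.1)).
    apply: eq_bigr => y _.
    by rwb (Hiii (Sinv y.2) (fun u v g => \sum_(d <- coR y.1) G (v * d.1) (g * d.2) u)); split; ls.
  by rewrite !big_split /= TA TB TC.
rewrite L3; ring.
Qed.

Lemma SI_rs p : SI p -> in_P_Omega1M coR (Dbl p).
Proof.
move=> HSI.
have HT : forall B : P -> H -> P -> k, tri B ->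
    \sum_(t <- [seq (x.2, x.1) | x <- Dbl p]) \sum_(a <- coR t.1) B a.1 a.2 t.2 =
    \sum_(t <- [seq (x.2, x.1) | x <- Dbl p]) B t.1 1 t.2.
  by move=> B HB; rewrite !big_map; apply: HSI.
have [s [Hs1 Hs2]] := exact_inv HcoR HT.
have Hts : teq2 (Dbl p) [seq (m.2, m.1) | m <- s].
  apply: teq_of => B [B1 B2]; rewrite big_map.
  have := Hs2 (fun u v => B v u); rewrite big_map /= => -> //; split; ls.
have s0 := mulsum0 _ _ Hts (Dbl_Om1 p); rewrite big_map /= in s0.
exists [seq (m.2, [:: (1, m.1); (- m.1, 1)]) | m <- s]; split.
  move=> x /mapP [m ms ->] /=; split.
    have cm : coinv coR m.1 by apply: coinvP => B HB; apply: Hs1.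
    move=> y; rewrite !inE => /orP [/eqP -> | /eqP ->] /=; split.
    - exact: coinv1.
    - exact: cm.
    - exact: coinvN.
    - exact: coinv1.
  by rewrite /in_Omega1 big_cons big_seq1 /= mulr1 mul1r subrr.
move=> f Hf; rewrite (Hts f Hf); move: f Hf; apply: teq_of => B HB; have [B1 B2] := HB.
rewrite sum_allp !big_map.
transitivity (\sum_(m <- s) B m.2 m.1 + B (- \sum_(m <- s) m.2 * m.1) 1).
  by rewrite s0 oppr0 (lin0 (B1 _)) addr0.
rewrite (linN (B1 _)) (lin_sumE _ _ (B1 _)) -sumrN -big_split /=.
by apply: eq_bigr => m _; rewrite big_cons big_seq1 /= mulr1 mulrN (linN (B1 _)).
Qed.


Lemma cond_ii_E : cond_ii cop eps Sinv coR omega <-> forall h, ii_f h.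
Proof.
have EL h (F : H -> P -> P -> k) : eval3 F [seq (a.1, a.2, x.2) | x <- omega h, a <- coL Sinv coR x.1] =
    \sum_(x <- omega h) \sum_(y <- coR x.1) F (Sinv y.2) y.1 x.2.
  by rewrite /eval3 sum_allp; apply: eq_bigr => x _; rewrite /coL big_map.
have ER h (F : H -> P -> P -> k) : eval3 F ([:: (h, 1, 1); (- (eps h)%:A, 1, 1)] ++
        [seq (y.1, z.1, z.2) | y <- cop h, z <- omega y.2]) =
    F h 1 1 + F (- (eps h)%:A) 1 1 + \sum_(y <- cop h) \sum_(z <- omega y.2) F y.1 z.1 z.2.
  by rewrite /eval3 big_cat sum_allp !big_cons big_nil /= addr0.
split=> Hc h.
  by move=> G HG; have := Hc h G (proj1 (triE G) HG); rewrite EL ER.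
by move=> F HF; rewrite EL ER; apply: Hc; apply/triE.
Qed.

Lemma cond_iii_E : cond_iii cop eps coR omega <-> forall h, iii_f h.
Proof.
have EL h (F : P -> P -> H -> k) : eval3 F [seq (x.1, a.1, a.2) | x <- omega h, a <- coR x.2] =
    \sum_(x <- omega h) \sum_(a <- coR x.2) F x.1 a.1 a.2.
  by rewrite /eval3 sum_allp.
have ER h (F : P -> P -> H -> k) : eval3 F ([:: (1, 1, h); (1, 1, - (eps h)%:A)] ++
        [seq (z.1, z.2, y.2) | y <- cop h, z <- omega y.1]) =
    F 1 1 h + F 1 1 (- (eps h)%:A) + \sum_(y <- cop h) \sum_(z <- omega y.1) F z.1 z.2 y.2.
  by rewrite /eval3 big_cat sum_allp !big_cons big_nil /= addr0.
split=> Hc h.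
  by move=> G HG; have := Hc h G (proj1 (triE G) HG); rewrite EL ER.
by move=> F HF; rewrite EL ER; apply: Hc; apply/triE.
Qed.

Lemma main_sec : (forall u : seq (P * H), exists t, teq2 (can coR t) u) ->
  [/\ left_strong coR omega <-> cond_ii cop eps Sinv coR omega,
      left_strong coR omega <-> cond_iii cop eps coR omega &
      left_strong coR omega -> right_strong_bar Sinv coR omega].
Proof.
move=> Hcan.
have ls_iii' : left_strong coR omega -> forall h, iii_f h.
  by move=> Hls; apply: ls_iii => // y; apply: Hls.
have F1_ls : (forall h, F1_f h) -> left_strong coR omega.
  by move=> HF p; apply: FI_ls; apply: F1_FI.
split.
- rewrite cond_ii_E; split.
  + by move=> Hls h; apply: F1_ii; apply: iii_F1; apply: ls_iii'.
  + by move=> Hii; apply: F1_ls => h; apply: ii_F1.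
- rewrite cond_iii_E; split; first exact: ls_iii'.
  by move=> Hiii; apply: F1_ls => h; apply: iii_F1.
- by move=> Hls p; apply: SI_rs; apply: iii_SI; apply: ls_iii'.
Qed.

End Bundle.

Theorem proposition3p4 (k : fieldType) (H P : algType k)
    (cop : H -> seq (H * H)) (eps : H -> k) (S Sinv : H -> H)
    (coR : P -> seq (P * H)) (omega : H -> seq (P * P)) :
  is_qpb cop eps S Sinv coR ->
  is_connection cop eps S coR omega ->
  [/\ left_strong coR omega <-> cond_ii cop eps Sinv coR omega,
      left_strong coR omega <-> cond_iii cop eps coR omega &
      left_strong coR omega -> right_strong_bar Sinv coR omega].
Proof.
move=> [[[[Hcop Heps HS] [[Hcoass HcuL HcuR Hcm Hc1] [Hem He1 HAL HAR]]] HSK HKS]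
        [[HcoR HcoA HcoU HcoM Hco1] _ Hcan _]].
move=> [Hom Hom1 HomO HomV HomE].
by apply: main_sec.
Qed.
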